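(* Let $\epsilon\in(0,1]$, $\delta\in(0,1)$, $0<\eta\le\frac{\epsilon}{40}$. Then the Multiplicative Weights mechanism $M^*_\eta$ is $4\eta$-approximately truthful, and for every belief matrix $P\in[0,1]^{n\times m}$ and ground truth $\vec\theta\in[0,1]^m$ with $m\ge\frac{5\ln(2n/\delta)}{\eta\epsilon}$, and every report matrix $R$ in which each $r_i$ is undominated for belief $p_i$, with probability at least $1-\delta$ over $\vec y\sim\vec\theta$ and $i\sim M^*_\eta(R,\vec y)$ the selected forecaster is $\epsilon$-optimal. In particular, with $\eta=\epsilon/40$, the event complexity satisfies $m^*(n,\epsilon,\delta)\le\frac{200\ln(2n/\delta)}{\epsilon^2}$.
   Context: Setting: $n\ge2$ forecasters, $m$ independent binary events with $\Pr[y_t=1]=\theta_t$ (written $\vec y\sim\vec\theta$); forecaster $i$ has beliefs $p_i\in[0,1]^m$ and reports $r_i\in[0,1]^m$. Quadratic score $S(q,y)=1-(y-q)^2$. Accuracy $a_i=1-\frac1m\sum_t(p_{it}-\theta_t)^2$; $i$ is $\epsilon$-optimal if $a_i\ge\max_ja_j-\epsilon$. Multiplicative Weights: $M^*_\eta(R,\vec y)_i=\exp(\eta\sum_tS(r_{it},y_t))/\sum_j\exp(\eta\sum_tS(r_{jt},y_t))$. $M(R;p_i)=\mathbb{E}_{\vec y\sim p_i}M(R,\vec y)$ with $y_t\sim\mathrm{Bernoulli}(p_{it})$ independently. For fixed $p_i$, $\hat r_i$ strictly dominates $r_i$ if $M(\hat r_i,R_{-i};p_i)_i>M(r_i,R_{-i};p_i)_i$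 for all $R_{-i}$; $r_i$ is undominated otherwise. $\gamma$-approximately truthful: for all $p_i$ an undominated report exists and all undominated $r_i$ satisfy $\|r_i-p_i\|_\infty\le\gamma$. A mechanism is $(\epsilon,\delta)$-accurate in setting $(n,m,P,\vec\theta)$ if for all $R$ consisting of undominated reports, with probability $\ge1-\delta$ over $\vec y\sim\vec\theta$ and $i\sim M(R,\vec y)$, $i$ is $\epsilon$-optimal; the event complexity $m^*(n,\epsilon,\delta)$ is the smallest $m$ such that the mechanism is $(\epsilon,\delta)$-accurate for all $(P,\vec\theta)$ with $n$ forecasters and $m$ events. *)

(* Defs.v *)
From HB Require Import structures.
From mathcomp Require Import all_boot all_order all_algebra.
From mathcomp Require Import all_classical all_reals all_analysis.
Set Implicit Arguments. Unset Strict Implicit. Unset Printing Implicit Defensive.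
Import Order.TTheory GRing.Theory Num.Theory.
Local Open Scope ring_scope.

Section Defs.
Variables (R : realType) (n m : nat).

Definition outcome := {ffun 'I_m -> bool}.

Definition Sq (q : R) (b : bool) : R := 1 - ((b%:R : R) - q) ^+ 2.

(* report / belief matrices: rows = forecasters, columns = events *)
Definition mat := 'I_n -> 'I_m -> R.

Definition in01 (v : 'I_m -> R) : Prop := forall t, 0 <= v t <= 1.

Definition total_score (r : mat) (y : outcome) (i : 'I_n) : R :=
  \sum_(t < m) Sq (r i t) (y t).

Definition MW (eta : R) (r : mat) (y : outcome) (i : 'I_n) : R :=
  expR (eta * total_score r y i) / \sum_(j < n) expR (eta * total_score r y j).

Definition probY (th : 'I_m -> R) (y : outcome) : R :=
  \prod_(t < m) (if y t then th t else 1 - th t).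

Definition Mexp (eta : R) (r : mat) (p : 'I_m -> R) (i : 'I_n) : R :=
  \sum_(y : outcome) probY p y * MW eta r y i.

Definition upd (r : mat) (i : 'I_n) (ri : 'I_m -> R) : mat :=
  fun j => if j == i then ri else r j.

(* rhat strictly dominates ri for forecaster i with belief p:
   for all reports R_{-i} of the others (row i of r is ignored) *)
Definition strictly_dominates (eta : R) (i : 'I_n) (p : 'I_m -> R)
    (rhat ri : 'I_m -> R) : Prop :=
  forall r : mat, (forall j, in01 (r j)) ->
    Mexp eta (upd r i ri) p i < Mexp eta (upd r i rhat) p i.

Definition undominated (eta : R) (i : 'I_n) (p : 'I_m -> R)
    (ri : 'I_m -> R) : Prop :=
  in01 ri /\ ~ (exists rhat, in01 rhat /\ strictly_dominates eta i p rhat ri).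

Definition approx_truthful (eta gamma : R) : Prop :=
  forall (i : 'I_n) (p : 'I_m -> R), in01 p ->
    (exists ri, undominated eta i p ri) /\
    (forall ri, undominated eta i p ri -> forall t, `|ri t - p t| <= gamma).

Definition accuracy (P : mat) (th : 'I_m -> R) (i : 'I_n) : R :=
  1 - (\sum_(t < m) (P i t - th t) ^+ 2) / m%:R.

Definition eps_optimal (P : mat) (th : 'I_m -> R) (eps : R) (i : 'I_n) : bool :=
  [forall j, accuracy P th j - eps <= accuracy P th i].

Definition accurate (eta eps delta : R) (P : mat) (th : 'I_m -> R) : Prop :=
  forall r : mat, (forall i, undominated eta i (P i) (r i)) ->
    1 - delta <=
    \sum_(y : outcome) probY th y *
      \sum_(i < n | eps_optimal P th eps i) MW eta r y i.

End Defs.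

(* Main.v *)
Require Import Defs.
From HB Require Import structures.
From mathcomp Require Import all_boot all_order all_algebra.
From mathcomp Require Import all_classical all_reals all_analysis.
From mathcomp Require Import ring lra.
Import Order.TTheory GRing.Theory Num.Theory.
Local Open Scope ring_scope.
Set Implicit Arguments. Unset Strict Implicit. Unset Printing Implicit Defensive.
Section RealLemmas.
Variable R : realType.
Implicit Types x y z u v a B : R.

Lemma expR_le_inv x : x < 1 -> expR x <= (1 - x)^-1.
Proof.
move=> x1; have h := expR_ge1Dx (- x).
rewrite expRN in h.
have hx : 0 < 1 - x by lra.
rewrite -[expR x]invrK lef_pV2 ?posrE ?invr_gt0 ?expR_gt0 //.
Qed.

Lemma expR_quad z : z <= 1/2 -> expR z <= 1 + z + 2 * z ^+ 2.
Proof.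
move=> hz; have hz1 : z < 1 by lra.
apply: (le_trans (expR_le_inv hz1)).
have hx : 0 < 1 - z by lra.
have h2 : 0 <= z^+2 * (1 - 2 * z) by apply: mulr_ge0; [exact: sqr_ge0|lra].
have hp : 0 < 1 + z + 2 * z ^+ 2 by nra.
rewrite -[(1 - z)^-1]mul1r ler_pdivrMr //; nra.
Qed.

Lemma expR_lin y : 0 <= y <= 1/2 -> expR y <= 1 + 2 * y.
Proof.
move=> /andP[h0 h1]; have hz1 : y < 1 by lra.
apply: (le_trans (expR_le_inv hz1)).
have hx : 0 < 1 - y by lra.
rewrite -[(1 - y)^-1]mul1r ler_pdivrMr //; nra.
Qed.

End RealLemmas.
Section Core.
Variable R : realType.
Implicit Types x y z u v a B : R.

Lemma frac_le (X Y Z W : R) : 0 < Y -> 0 < W -> X * W <= Z * Y -> X / Y <= Z / W.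
Proof.
move=> hY hW h; rewrite ler_pdivlMr // mulrAC ler_pdivrMr //.
Qed.

Definition Hf a B : R := a * B / (a + B) ^+ 2.

Lemma Hf_gt0 a B : 0 < a -> 0 < B -> 0 < Hf a B.
Proof. by move=> ha hB; rewrite /Hf divr_gt0 ?mulr_gt0 ?exprn_gt0 ?addr_gt0. Qed.

Lemma L1 a B u : 0 < a -> 0 < B -> 0 <= u ->
  u * expR (- u) * Hf a B <= a * expR u / (a * expR u + B) - a / (a + B).
Proof.
move=> ha hB hu; set E := expR u.
have E1 : 1 + u <= E by exact: expR_ge1Dx.
have E0 : 0 < E by exact: expR_gt0.
have hd1 : 0 < a * E + B by rewrite addr_gt0 ?mulr_gt0.
have hd2 : 0 < a + B by rewrite addr_gt0.
have -> : a * E / (a * E + B) - a / (a + B) = a * B * (E - 1) / ((a * E + B) * (a + B)).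
  by field; apply/andP; split; rewrite gt_eqF.
rewrite /Hf expRN -/E.
have -> : u * E^-1 * (a * B / (a + B) ^+ 2) = (a * B * u) / (E * (a + B) ^+ 2).
  by field; apply/andP; split; rewrite gt_eqF.
apply: frac_le; [by rewrite mulr_gt0 ?exprn_gt0 | by rewrite mulr_gt0 |].
have hab : 0 < a * B by rewrite mulr_gt0.
have k1 : u * (a * E + B) <= (E - 1) * (E * (a + B)).
  apply: ler_pM; [done| lra | lra | nra].
have k2 : 0 <= a * B * (a + B) by rewrite mulr_ge0 // ltW.
have := ler_wpM2l k2 k1.
lra.
Qed.

Lemma L2 a B v : 0 < a -> 0 < B -> 0 <= v ->
  a / (a + B) - a * expR (- v) / (a * expR (- v) + B) <= v * expR v * Hf a B.
Proof.
move=> ha hB hv; set F := expR (- v).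
have F1 : 1 - v <= F by have := expR_ge1Dx (- v); rewrite -/F; lra.
have F0 : 0 < F by exact: expR_gt0.
have hd1 : 0 < a * F + B by rewrite addr_gt0 ?mulr_gt0.
have hd2 : 0 < a + B by rewrite addr_gt0.
have FE : expR v = F^-1 by rewrite /F expRN invrK.
have -> : a / (a + B) - a * F / (a * F + B) = a * B * (1 - F) / ((a + B) * (a * F + B)).
  by field; apply/andP; split; rewrite gt_eqF.
rewrite /Hf FE.
have -> : v * F^-1 * (a * B / (a + B) ^+ 2) = (a * B * v) / (F * (a + B) ^+ 2).
  by field; apply/andP; split; rewrite gt_eqF.
apply: frac_le; [by rewrite mulr_gt0 | by rewrite mulr_gt0 ?exprn_gt0 |].
have hab : 0 < a * B by rewrite mulr_gt0.
have F1' : F <= 1 by rewrite /F -expR0 ler_expR; lra.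
have k1 : (1 - F) * (F * (a + B)) <= v * (a * F + B).
  apply: ler_pM; [lra| nra | lra | nra].
have k2 : 0 <= a * B * (a + B) by rewrite mulr_ge0 // ltW.
have := ler_wpM2l k2 k1.
lra.
Qed.

End Core.
Section Core3.
Variable R : realType.
Implicit Types x y z u v a B w k : R.

Lemma L3w w0 w1 k : 0 < w0 -> 0 < w1 -> w1 <= k * w0 -> w0 <= k * w1 ->
  w0 * (1 + w1) ^+ 2 <= k * w1 * (1 + w0) ^+ 2.
Proof.
move=> h0 h1 hk1 hk2.
have [le01|lt10] := leP w0 w1.
  have s1 : w0 * (1 + w1) <= w1 * (1 + w0) by nra.
  have s2 : (w0 * (1 + w1)) ^+ 2 <= (w1 * (1 + w0)) ^+ 2.
    by rewrite ler_sqr ?nnegrE; [ | nra | nra].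
  have s3 : w1 * (w1 * (1 + w0) ^+ 2) <= (k * w0) * (w1 * (1 + w0) ^+ 2).
    by apply: ler_wpM2r => //; nra.
  have s4 : w0 * (w0 * (1 + w1) ^+ 2) <= w0 * (k * w1 * (1 + w0) ^+ 2).
    have -> : w0 * (w0 * (1 + w1) ^+ 2) = (w0 * (1 + w1)) ^+ 2 by ring.
    have -> : w0 * (k * w1 * (1 + w0) ^+ 2) = (k * w0) * (w1 * (1 + w0) ^+ 2) by ring.
    apply: le_trans s2 _.
    have -> : (w1 * (1 + w0)) ^+ 2 = w1 * (w1 * (1 + w0) ^+ 2) by ring.
    exact: s3.
  by rewrite ler_pM2l in s4.
have s1 : w0 * (1 + w1) ^+ 2 <= w0 * (1 + w0) ^+ 2.
  by apply: ler_wpM2l; [lra | rewrite ler_sqr ?nnegrE; lra].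
apply: le_trans s1 _; apply: ler_wpM2r => //; exact: sqr_ge0.
Qed.

End Core3.
Section Core4.
Variable R : realType.
Implicit Types x y z u v a B w k e P c : R.

Lemma L3 a0 B0 a1 B1 k : 0 < a0 -> 0 < B0 -> 0 < a1 -> 0 < B1 ->
  a1 * B0 <= k * (a0 * B1) -> a0 * B1 <= k * (a1 * B0) ->
  Hf a0 B0 <= k * Hf a1 B1.
Proof.
move=> ha0 hB0 ha1 hB1 h1 h2.
have hf : forall a B, 0 < a -> 0 < B -> Hf a B = (a / B) / (1 + a / B) ^+ 2.
  move=> a B ha hB; rewrite /Hf; field.
  by rewrite !gt_eqF // addr_gt0.
rewrite !hf //.
have w0p : 0 < a0 / B0 by rewrite divr_gt0.
have w1p : 0 < a1 / B1 by rewrite divr_gt0.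
have k1 : a1 / B1 <= k * (a0 / B0).
  rewrite ler_pdivrMr // mulrAC mulrA ler_pdivlMr //; nra.
have k2 : a0 / B0 <= k * (a1 / B1).
  rewrite ler_pdivrMr // mulrAC mulrA ler_pdivlMr //; nra.
rewrite mulrA; apply: frac_le; [by rewrite exprn_gt0 // addr_gt0 | by rewrite exprn_gt0 // addr_gt0|].
exact: L3w.
Qed.

Definition mwf a B : R := a / (a + B).

Lemma Sq_true x : Sq x true = 1 - (1 - x) ^+ 2.
Proof. by rewrite /Sq. Qed.
Lemma Sq_false x : Sq x false = 1 - x ^+ 2.
Proof. by rewrite /Sq /= sub0r sqrrN. Qed.

End Core4.
Section Core5.
Variable R : realType.
Implicit Types x y z u v a B w k e P c : R.

Lemma eqle x y : x = y -> x <= y. Proof. by move=> ->. Qed.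

Lemma core e P x c B1 B0 : 0 < e -> e <= 1/40 -> 0 <= x -> x + 4 * e < P -> P <= 1 ->
  0 < c -> 0 < B1 -> 0 < B0 -> B1 <= expR e * B0 -> B0 <= expR e * B1 ->
  0 < P * (mwf (c * expR (e * Sq (x + e) true)) B1 - mwf (c * expR (e * Sq x true)) B1)
    + (1 - P) * (mwf (c * expR (e * Sq (x + e) false)) B0 - mwf (c * expR (e * Sq x false)) B0).
Proof.
move=> he he1 hx hxP hP1 hc hB1 hB0 hb1 hb0.
set a1 := c * expR (e * Sq x true).
set a0 := c * expR (e * Sq x false).
set U := e * (e * (2 - 2 * x - e)).
set V := e * (e * (2 * x + e)).
have ha1 : 0 < a1 by rewrite mulr_gt0 ?expR_gt0.
have ha0 : 0 < a0 by rewrite mulr_gt0 ?expR_gt0.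
have eU : c * expR (e * Sq (x + e) true) = a1 * expR U.
  rewrite /a1 -mulrA -expRD; congr (_ * expR _).
  rewrite /U !Sq_true; ring.
have eV : c * expR (e * Sq (x + e) false) = a0 * expR (- V).
  rewrite /a0 -mulrA -expRD; congr (_ * expR _).
  rewrite /V !Sq_false; ring.
rewrite eU eV /mwf -/a1 -/a0.
have hU : 0 <= U by rewrite /U; apply: mulr_ge0; [lra|]; apply: mulr_ge0; lra.
have hV : 0 <= V by rewrite /V; apply: mulr_ge0; [lra|]; apply: mulr_ge0; lra.
have D1 := L1 ha1 hB1 hU.
have D0 := L2 ha0 hB0 hV.
set k := expR (e + e).
have hk : k = expR e * expR e by rewrite /k expRD.
have ea1 : a1 = a0 * expR (e * (2 * x - 1)).
  rewrite /a1 /a0 -mulrA -expRD; congr (_ * expR _); rewrite Sq_true Sq_false; ring.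
have ee0 : 0 < expR e by exact: expR_gt0.
have r1 : expR (e * (2 * x - 1)) <= expR e.
  rewrite ler_expR; have : 2 * x - 1 <= 1 by lra. nra.
have r2 : expR (- (e * (2 * x - 1))) <= expR e.
  rewrite ler_expR; have : 0 <= x by lra. nra.
have H3 : Hf a0 B0 <= k * Hf a1 B1.
  apply: L3 => //.
    rewrite ea1 hk.
    have t1 : a0 * expR (e * (2 * x - 1)) * B0 <= a0 * expR e * B0.
      by apply: ler_wpM2r; [lra| apply: ler_wpM2l => //; lra].
    apply: le_trans t1 _.
    have t2 : a0 * expR e * B0 <= a0 * expR e * (expR e * B1).
      by apply: ler_wpM2l => //; rewrite mulr_ge0 // ltW.
    by apply: le_trans t2 _; apply: eqle; ring.
  have ea0 : a0 = a1 * expR (- (e * (2 * x - 1))).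
    by rewrite ea1 -mulrA -expRD subrr expR0 mulr1.
  rewrite ea0 hk.
  have t1 : a1 * expR (- (e * (2 * x - 1))) * B1 <= a1 * expR e * B1.
    by apply: ler_wpM2r; [lra| apply: ler_wpM2l => //; lra].
  apply: le_trans t1 _.
  have t2 : a1 * expR e * B1 <= a1 * expR e * (expR e * B0).
    by apply: ler_wpM2l => //; rewrite mulr_ge0 // ltW.
  by apply: le_trans t2 _; apply: eqle; ring.
have poly : (1 - P) * V * (1 + 2 * (U + V + (e + e))) < P * U.
  set g := 4 * e + 4 * e ^+ 2.
  have eq1 : P * U - (1 - P) * V * (1 + 2 * (U + V + (e + e)))
       = e * e * ((2 * P - 2 * x - e) - (1 - P) * (2 * x + e) * g).
    by rewrite /U /V /g; ring.
  have s1 : 7 * e < 2 * P - 2 * x - e by lra.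
  have hg : 0 <= g by rewrite /g; have := sqr_ge0 e; lra.
  have hg1 : g <= 41 / 10 * e by rewrite /g; nra.
  have hP0 : 0 <= 1 - P by lra.
  have s2 : (1 - P) * (2 * x + e) * g <= (1 - P) * (2 * P) * g.
    by apply: ler_wpM2r => //; apply: ler_wpM2l => //; lra.
  have s3 : (1 - P) * (2 * P) <= 1 / 2 by have := sqr_ge0 (2 * P - 1); nra.
  have s4 : (1 - P) * (2 * P) * g <= 1 / 2 * g by apply: ler_wpM2r.
  have f0 : 0 < (2 * P - 2 * x - e) - (1 - P) * (2 * x + e) * g by lra.
  rewrite -subr_gt0 eq1; apply: mulr_gt0 => //; exact: mulr_gt0.
have hY : expR (U + V + (e + e)) <= 1 + 2 * (U + V + (e + e)).
  apply: expR_lin; apply/andP; split; first lra.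
  rewrite /U /V; nra.
have hkey : (1 - P) * V * (expR V * k) < P * (U * expR (- U)).
  have eK : expR V * k = expR (- U) * expR (U + V + (e + e)).
    by rewrite /k -!expRD; congr expR; ring.
  rewrite eK.
  have eu0 : 0 < expR (- U) by exact: expR_gt0.
  have : (1 - P) * V * expR (U + V + (e + e)) < P * U.
    apply: le_lt_trans poly; apply: ler_wpM2l => //.
    by apply: mulr_ge0 => //; lra.
  move=> h.
  have -> : (1 - P) * V * (expR (- U) * expR (U + V + (e + e)))
     = (1 - P) * V * expR (U + V + (e + e)) * expR (- U) by ring.
  by rewrite mulrA ltr_pM2r.
set X1 := a1 * expR U / (a1 * expR U + B1) - a1 / (a1 + B1).
set X0 := a0 * expR (- V) / (a0 * expR (- V) + B0) - a0 / (a0 + B0).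
set H1 := Hf a1 B1.
have hH1 : 0 < H1 by exact: Hf_gt0.
have hP0 : 0 <= P by lra.
have hP1' : 0 <= 1 - P by lra.
have c1 : P * (U * expR (- U) * H1) <= P * X1 by apply: ler_wpM2l.
have D0' : - X0 <= V * expR V * Hf a0 B0 by rewrite /X0 opprB.
have hVe : 0 <= V * expR V by rewrite mulr_ge0 // ltW // expR_gt0.
have c2 : V * expR V * Hf a0 B0 <= V * expR V * (k * H1) by apply: ler_wpM2l.
have c3 : (1 - P) * (- X0) <= (1 - P) * (V * expR V * (k * H1)).
  by apply: ler_wpM2l => //; apply: le_trans c2.
have c4 : 0 < H1 * (P * (U * expR (- U)) - (1 - P) * V * (expR V * k)).
  by apply: mulr_gt0 => //; rewrite subr_gt0.
have e4 : H1 * (P * (U * expR (- U)) - (1 - P) * V * (expR V * k))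
   = P * (U * expR (- U) * H1) - (1 - P) * (V * expR V * (k * H1)) by ring.
rewrite e4 in c4.
have e5 : (1 - P) * (- X0) = - ((1 - P) * X0) by ring.
rewrite e5 in c3.
lra.
Qed.

End Core5.
Section Core6.
Variable R : realType.
Implicit Types x y z u v a B w k e P c : R.

Lemma Sq_flip x b : Sq (1 - x) b = Sq x (~~ b).
Proof. by case: b; rewrite ?Sq_true ?Sq_false /=; congr (_ - _); ring. Qed.

Lemma core_dn e P x c B1 B0 : 0 < e -> e <= 1/40 -> x <= 1 -> P + 4 * e < x -> 0 <= P ->
  0 < c -> 0 < B1 -> 0 < B0 -> B1 <= expR e * B0 -> B0 <= expR e * B1 ->
  0 < P * (mwf (c * expR (e * Sq (x - e) true)) B1 - mwf (c * expR (e * Sq x true)) B1)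
    + (1 - P) * (mwf (c * expR (e * Sq (x - e) false)) B0 - mwf (c * expR (e * Sq x false)) B0).
Proof.
move=> he he1 hx hxP hP0 hc hB1 hB0 hb1 hb0.
have := @core _ e (1 - P) (1 - x) c B0 B1 he he1 _ _ _ hc hB0 hB1 hb0 hb1.
have e1 : 1 - x + e = 1 - (x - e) by ring.
have e2 : 1 - (1 - P) = P by ring.
rewrite e1 !Sq_flip /= e2 => h.
rewrite addrC; apply: h; lra.
Qed.

End Core6.
Section Mech.
Variables (R : realType) (n m : nat).

Definition flip (t : 'I_m) (y : outcome m) : outcome m :=
  [ffun s => if s == t then ~~ y s else y s].

Lemma flipt (t : 'I_m) (y : outcome m) : flip t y t = ~~ y t.
Proof. by rewrite ffunE eqxx. Qed.

Lemma flipne (t : 'I_m) (y : outcome m) s : s != t -> flip t y s = y s.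
Proof. by move=> h; rewrite ffunE (negbTE h). Qed.

Lemma flipK (t : 'I_m) : involutive (flip t).
Proof.
move=> y; apply/ffunP => s; rewrite !ffunE.
by case: eqP => [->|]; rewrite ?eqxx ?negbK //; move/eqP/negbTE => ->.
Qed.

Lemma pair_sum (t : 'I_m) (G : outcome m -> R) :
  \sum_(y : outcome m) G y = \sum_(y : outcome m | y t) (G y + G (flip t y)).
Proof.
rewrite (bigID (fun y : outcome m => y t)) /= big_split /=; congr (_ + _).
rewrite (reindex_inj (inv_inj (flipK t))) /=.
by apply: eq_bigl => y; rewrite flipt negbK.
Qed.

Definition Qp (p : 'I_m -> R) (t : 'I_m) (y : outcome m) : R :=
  \prod_(s | s != t) (if y s then p s else 1 - p s).

Lemma probY_t (p : 'I_m -> R) (t : 'I_m) (y : outcome m) : y t -> probY p y = p t * Qp p t y.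
Proof. by move=> hy; rewrite /probY (bigD1 t) //= hy. Qed.

Lemma probY_flip (p : 'I_m -> R) (t : 'I_m) (y : outcome m) : y t -> probY p (flip t y) = (1 - p t) * Qp p t y.
Proof.
move=> hy; rewrite /probY (bigD1 t) //= flipt hy /=; congr (_ * _).
by apply: eq_bigr => s hs; rewrite flipne.
Qed.

Lemma Qp_flip (p : 'I_m -> R) (t : 'I_m) (y : outcome m) : Qp p t (flip t y) = Qp p t y.
Proof. by apply: eq_bigr => s hs; rewrite flipne. Qed.

Lemma sum_probY_prod (p : 'I_m -> R) (f : 'I_m -> bool -> R) :
  \sum_(y : outcome m) probY p y * \prod_t f t (y t) =
  \prod_t (p t * f t true + (1 - p t) * f t false).
Proof.
rewrite (eq_bigr (fun t => \sum_(b : bool) (if b then p t else 1 - p t) * f t b)); last first.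
  by move=> t _; rewrite big_bool.
rewrite bigA_distr_bigA /=; apply: eq_bigr => y _.
by rewrite /probY -big_split.
Qed.

Lemma sum_probY (p : 'I_m -> R) : \sum_(y : outcome m) probY p y = 1.
Proof.
have h := sum_probY_prod p (fun _ _ => 1).
rewrite (eq_bigr (fun y => probY p y * \prod_t (fun _ _ => 1 : R) t (y t))); last first.
  by move=> y _; rewrite big1 ?mulr1.
rewrite h big1 //= => t _; ring.
Qed.

End Mech.
Section Mech2.
Variables (R : realType) (n m : nat).

Definition tsv (v : 'I_m -> R) (y : outcome m) : R := \sum_t Sq (v t) (y t).

Definition Oth (eta : R) (r : mat R n m) (i : 'I_n) (y : outcome m) : R :=
  \sum_(j | j != i) expR (eta * total_score r y j).

Lemma MW_upd eta (r : mat R n m) i v y :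
  MW eta (upd r i v) y i = mwf (expR (eta * tsv v y)) (Oth eta r i y).
Proof.
rewrite /MW /mwf (bigD1 i) //=.
have -> : total_score (upd r i v) y i = tsv v y by rewrite /total_score /upd eqxx.
congr (_ / (_ + _)); apply: eq_bigr => j hj.
by rewrite /total_score /upd (negbTE hj).
Qed.

Lemma tsv_split v y t : tsv v y = Sq (v t) (y t) + \sum_(s | s != t) Sq (v s) (y s).
Proof. by rewrite /tsv (bigD1 t). Qed.

Lemma Oth_pos eta (r : mat R n m) i y : (1 < n)%N -> 0 < Oth eta r i y.
Proof.
move=> hn.
have [j hj] : exists j : 'I_n, j != i.
  have h0 : (0 < n)%N by apply: ltn_trans hn.
  pose j0 : 'I_n := Ordinal h0; pose j1 : 'I_n := Ordinal hn.
  case: (eqVneq i j0) => [->|hi]; last by exists j0; rewrite eq_sym.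
  by exists j1.
rewrite /Oth (bigD1 j) //= ltr_pwDl ?expR_gt0 //.
by apply: sumr_ge0 => k _; rewrite ltW ?expR_gt0.
Qed.

Lemma Sq_diff (q : R) b : 0 <= q <= 1 -> Sq q b - Sq q (~~ b) <= 1.
Proof. by case: b => /andP[h0 h1]; rewrite /= ?Sq_true ?Sq_false; nra. Qed.

Lemma Oth_flip eta (r : mat R n m) i y t : (forall j, in01 (r j)) -> 0 <= eta ->
  Oth eta r i y <= expR eta * Oth eta r i (flip t y).
Proof.
move=> hr he; rewrite /Oth mulr_sumr; apply: ler_sum => j _.
rewrite -expRD ler_expR.
have e1 : total_score r y j = tsv (r j) y by [].
have e2 : total_score r (flip t y) j = tsv (r j) (flip t y) by [].
rewrite e1 e2 !(tsv_split _ _ t) flipt.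
have -> : \sum_(s | s != t) Sq (r j s) (flip t y s) = \sum_(s | s != t) Sq (r j s) (y s).
  by apply: eq_bigr => s hs; rewrite flipne.
have := Sq_diff (y t) (hr j t); nra.
Qed.

Lemma Oth_flip' eta (r : mat R n m) i y t : (forall j, in01 (r j)) -> 0 <= eta ->
  Oth eta r i (flip t y) <= expR eta * Oth eta r i y.
Proof. by move=> hr he; rewrite -{2}(flipK t y); apply: Oth_flip. Qed.

End Mech2.
Section Dom.
Variables (R : realType) (n m : nat).

Definition restS (v : 'I_m -> R) (t : 'I_m) (y : outcome m) : R :=
  \sum_(s | s != t) Sq (v s) (y s).

Lemma MW_expand eta (r : mat R n m) i v y t :
  MW eta (upd r i v) y i =
  mwf (expR (eta * restS v t y) * expR (eta * Sq (v t) (y t))) (Oth eta r i y).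
Proof. by rewrite MW_upd (tsv_split _ _ t) -expRD mulrDr addrC. Qed.

Lemma restS_flip v t y : restS v t (flip t y) = restS v t y.
Proof. by apply: eq_bigr => s hs; rewrite flipne. Qed.

Definition chg (v : 'I_m -> R) (t : 'I_m) (xn : R) : 'I_m -> R :=
  fun s => if s == t then xn else v s.

Lemma restS_chg v t xn y : restS (chg v t xn) t y = restS v t y.
Proof. by apply: eq_bigr => s hs; rewrite /chg (negbTE hs). Qed.

Lemma dom_gen eta (i : 'I_n) (p ri : 'I_m -> R) (t : 'I_m) xn :
  (1 < n)%N -> 0 <= eta -> in01 p ->
  (forall c B1 B0, 0 < c -> 0 < B1 -> 0 < B0 -> B1 <= expR eta * B0 -> B0 <= expR eta * B1 ->
     0 < p t * (mwf (c * expR (eta * Sq xn true)) B1 - mwf (c * expR (eta * Sq (ri t) true)) B1)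
       + (1 - p t) * (mwf (c * expR (eta * Sq xn false)) B0 - mwf (c * expR (eta * Sq (ri t) false)) B0)) ->
  strictly_dominates eta i p (chg ri t xn) ri.
Proof.
move=> hn he hp H r hr.
rewrite /Mexp -subr_gt0 -sumrB.
rewrite (eq_bigr (fun y => probY p y * (MW eta (upd r i (chg ri t xn)) y i - MW eta (upd r i ri) y i))); last first.
  by move=> y _; rewrite mulrBr.
rewrite (pair_sum t).
set F := fun y : outcome m => Qp p t y * (p t * (MW eta (upd r i (chg ri t xn)) y i - MW eta (upd r i ri) y i)
    + (1 - p t) * (MW eta (upd r i (chg ri t xn)) (flip t y) i - MW eta (upd r i ri) (flip t y) i)).
rewrite (eq_bigr F); last first.
  by move=> y hy; rewrite /F (probY_t p hy) (probY_flip p hy); ring.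
have Fpos : forall y : outcome m, y t -> 0 < p t * (MW eta (upd r i (chg ri t xn)) y i - MW eta (upd r i ri) y i)
    + (1 - p t) * (MW eta (upd r i (chg ri t xn)) (flip t y) i - MW eta (upd r i ri) (flip t y) i).
  move=> y hy.
  rewrite !(MW_expand _ _ _ _ _ t) !restS_flip !restS_chg flipt hy /chg eqxx /=.
  apply: H; [exact: expR_gt0 | exact: Oth_pos | exact: Oth_pos | exact: Oth_flip | exact: Oth_flip'].
have Qge0 : forall y : outcome m, 0 <= Qp p t y.
  move=> y; apply: prodr_ge0 => s _; case: (y s); have := hp s; lra.
pose y0 : outcome m := [ffun s => if s == t then true else (1/2 <= p s)].
have hy0 : y0 t by rewrite ffunE eqxx.
have Qy0 : 0 < Qp p t y0.
  apply: prodr_gt0 => s hs; rewrite ffunE (negbTE hs).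
  case/andP: (hp s) => h0 h1; case: ifP => h; [lra|]; move/negbT: h; rewrite -ltNge => h; lra.
rewrite (bigD1 y0) //=.
have A : 0 < F y0 by rewrite /F mulr_gt0 // Fpos.
have B : 0 <= \sum_(y : outcome m | y t && (y != y0)) F y.
  by apply: sumr_ge0 => y /andP[hy _]; rewrite /F mulr_ge0 // ltW // Fpos.
lra.
Qed.

End Dom.
Import numFieldNormedType.Exports.
Section Cont.
Variables (R : realType) (n m : nat).
Local Notation T := {ptws 'I_m -> R^o}.
Definition ctsR (f : T -> R) := forall x : T, {for x, continuous f}.

Lemma cts_proj t : ctsR (fun v => v t).
Proof. move=> x; exact: (@proj_continuous _ (fun _ : 'I_m => R^o) t x). Qed.
Lemma cts_cst c : ctsR (fun _ => c).
Proof. by move=> x; apply: cst_continuous. Qed.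
Lemma cts_add f g : ctsR f -> ctsR g -> ctsR (fun v => f v + g v).
Proof. by move=> hf hg x; apply: continuousD. Qed.
Lemma cts_mul f g : ctsR f -> ctsR g -> ctsR (fun v => f v * g v).
Proof. by move=> hf hg x; apply: continuousM. Qed.
Lemma cts_opp f : ctsR f -> ctsR (fun v => - f v).
Proof. by move=> hf x; apply: continuousN. Qed.
Lemma cts_inv f : ctsR f -> (forall v, f v != 0) -> ctsR (fun v => (f v)^-1).
Proof. by move=> hf h x; apply: continuousV. Qed.
Lemma cts_exp f : ctsR f -> ctsR (fun v => expR (f v)).
Proof. by move=> hf x; apply: continuous_comp (hf x) _; exact: continuous_expR. Qed.
Lemma cts_sum (I : Type) (s : seq I) (P : pred I) (F : I -> T -> R) :
  (forall i, ctsR (F i)) -> ctsR (fun v => \sum_(i <- s | P i) F i v).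
Proof.
move=> hF; elim: s => [|a s IH].
  by under eq_fun do rewrite big_nil; exact: cts_cst.
under eq_fun do rewrite big_cons.
case: (P a).
  by apply: cts_add.
by [].
Qed.
Lemma cube_compact : compact [set v : T | forall t, `[0, 1]%classic (v t)].
Proof. exact: (@tychonoff _ (fun _ => R^o) (fun _ => `[0,1]%classic) (fun _ => @segment_compact R 0 1)). Qed.
Lemma cts_sq f : ctsR f -> ctsR (fun v => f v ^+ 2).
Proof. by move=> hf; under eq_fun do rewrite expr2; exact: cts_mul. Qed.

Lemma cts_tsv y : ctsR (fun v : T => tsv v y).
Proof.
rewrite /tsv; apply: cts_sum => t; rewrite /Sq.
apply: cts_add; first exact: cts_cst.
apply: cts_opp; apply: cts_sq; apply: cts_add; first exact: cts_cst.
apply: cts_opp; exact: cts_proj.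
Qed.

Lemma exists_undom eta (i : 'I_n) (p : 'I_m -> R) : in01 p ->
  exists ri, undominated eta i p ri.
Proof.
move=> hp.
pose r0 : mat R n m := fun _ _ => 0.
pose F : T -> R := fun v => Mexp eta (upd r0 i v) p i.
have hF : ctsR F.
  have -> : F = fun v => \sum_(y : outcome m) probY p y *
      (expR (eta * tsv v y) * (expR (eta * tsv v y) + Oth eta r0 i y)^-1).
    by apply: funext => v; rewrite /F /Mexp; apply: eq_bigr => y _; rewrite MW_upd.
  apply: cts_sum => y; apply: cts_mul; first exact: cts_cst.
  apply: cts_mul; first by apply: cts_exp; apply: cts_mul; [exact: cts_cst| exact: cts_tsv].
  apply: cts_inv.
    apply: cts_add; last exact: cts_cst.
    by apply: cts_exp; apply: cts_mul; [exact: cts_cst| exact: cts_tsv].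
  move=> v; rewrite gt_eqF //.
  have h1 : 0 < expR (eta * tsv v y) by exact: expR_gt0.
  have h2 : 0 <= Oth eta r0 i y.
    by rewrite /Oth; apply: sumr_ge0 => j _; rewrite ltW ?expR_gt0.
  lra.
have A0 : ([set v : T | forall t, `[0, 1]%classic (v t)] !=set0)%classic.
  by exists (fun _ => 0) => t /=; rewrite in_itv /= lexx ler01.
have [c hc cmax] := compact_EVT_max A0 (@cube_compact) (continuous_subspaceT (fun x => hF x)).
have hc01 : in01 c.
  by move=> t; move: hc; rewrite inE => /(_ t) /=; rewrite in_itv.
exists c; split => //.
case=> rh [hrh hdom].
have r0in : forall j, in01 (r0 j) by move=> j t; rewrite /r0 lexx ler01.
have := hdom r0 r0in.
have : F rh <= F c.
  by apply: cmax; rewrite inE => t /=; rewrite in_itv /=; exact: hrh.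
rewrite /F; lra.
Qed.
End Cont.
Section Truth.
Variables (R : realType) (n m : nat).

Lemma truthful (eta : R) : (1 < n)%N -> 0 < eta -> eta <= 1/40 ->
  approx_truthful n m eta (4 * eta).
Proof.
move=> hn he he1 i p hp; split; first exact: exists_undom.
move=> ri [hri hnd] t.
rewrite leNgt; apply/negP => hlt.
have hpt := hp t; have hrt := hri t.
case/andP: hpt => hp0 hp1; case/andP: hrt => hr0 hr1.
case: (ltrP (ri t) (p t)) => hcase.
  rewrite ltr0_norm ?subr_lt0 // in hlt.
  apply: hnd; exists (chg ri t (ri t + eta)); split.
    move=> s; rewrite /chg; case: eqP => _; last exact: hri.
    apply/andP; split; lra.
  apply: dom_gen => //; first lra.
  move=> c B1 B0 hc hB1 hB0 hb1 hb0; apply: core => //; lra.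
rewrite ger0_norm ?subr_ge0 // in hlt.
apply: hnd; exists (chg ri t (ri t - eta)); split.
  move=> s; rewrite /chg; case: eqP => _; last exact: hri.
  apply/andP; split; lra.
apply: dom_gen => //; first lra.
move=> c B1 B0 hc hB1 hB0 hb1 hb0; apply: core_dn => //; lra.
Qed.

End Truth.
Section AccReal.
Variable R : realType.
Implicit Types x q th d eta : R.

Lemma HB1 eta th d1 d0 : 0 < eta -> eta <= 1/2 -> 0 <= th <= 1 ->
  -1 <= d1 <= 1 -> -1 <= d0 <= 1 ->
  th * expR (eta * d1) + (1 - th) * expR (eta * d0)
    <= expR (eta * (th * d1 + (1 - th) * d0) + 2 * eta ^+ 2).
Proof.
move=> he he1 /andP[t0 t1] /andP[a0 a1] /andP[b0 b1].
have q1 : expR (eta * d1) <= 1 + eta * d1 + 2 * eta ^+ 2.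
  apply: le_trans (expR_quad _) _; first nra.
  have : (eta * d1) ^+ 2 <= eta ^+ 2.
    have hd : d1 ^+ 2 <= 1 by rewrite expr2; nra.
    by rewrite exprMn; apply: ler_piMr => //; exact: sqr_ge0.
  lra.
have q0 : expR (eta * d0) <= 1 + eta * d0 + 2 * eta ^+ 2.
  apply: le_trans (expR_quad _) _; first nra.
  have : (eta * d0) ^+ 2 <= eta ^+ 2.
    have hd : d0 ^+ 2 <= 1 by rewrite expr2; nra.
    by rewrite exprMn; apply: ler_piMr => //; exact: sqr_ge0.
  lra.
apply: le_trans (expR_ge1Dx _).
have s1 : th * expR (eta * d1) <= th * (1 + eta * d1 + 2 * eta ^+ 2) by apply: ler_wpM2l.
have s0 : (1 - th) * expR (eta * d0) <= (1 - th) * (1 + eta * d0 + 2 * eta ^+ 2).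
  by apply: ler_wpM2l => //; lra.
have -> : 1 + (eta * (th * d1 + (1 - th) * d0) + 2 * eta ^+ 2)
  = th * (1 + eta * d1 + 2 * eta ^+ 2) + (1 - th) * (1 + eta * d0 + 2 * eta ^+ 2) by ring.
lra.
Qed.

Lemma HB2 th x q :
  th * (Sq x true - Sq q true) + (1 - th) * (Sq x false - Sq q false)
  = (q - th) ^+ 2 - (x - th) ^+ 2.
Proof. rewrite !Sq_true !Sq_false; ring. Qed.

Lemma HB3 eta th x p : 0 <= th <= 1 -> 0 <= x <= 1 -> 0 <= p <= 1 -> `|x - p| <= 4 * eta ->
  `|(x - th) ^+ 2 - (p - th) ^+ 2| <= 8 * eta.
Proof.
move=> ht hx hp hxp.
have -> : (x - th) ^+ 2 - (p - th) ^+ 2 = (x - p) * (x + p - 2 * th) by ring.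
rewrite normrM.
have : `|x + p - 2 * th| <= 2.
  rewrite ler_norml; apply/andP; split; lra.
have := normr_ge0 (x - p); have := normr_ge0 (x + p - 2 * th).
nra.
Qed.

Lemma HB_Sq_bound x q b : 0 <= x <= 1 -> 0 <= q <= 1 -> -1 <= Sq x b - Sq q b <= 1.
Proof. by move=> /andP[? ?] /andP[? ?]; case: b; rewrite ?Sq_true ?Sq_false; apply/andP; split; nra. Qed.

End AccReal.
Section Acc.
Variables (R : realType) (n m : nat).

Lemma MW_le eta (r : mat R n m) y i j :
  MW eta r y i <= expR (eta * (total_score r y i - total_score r y j)).
Proof.
rewrite /MW mulrBr expRB; apply: ler_wpM2l; first exact/ltW/expR_gt0.
rewrite lef_pV2 ?posrE ?expR_gt0 //; last first.
  by rewrite (bigD1 j) //= ltr_pwDl ?expR_gt0 // sumr_ge0 // => k _; rewrite ltW ?expR_gt0.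
rewrite (bigD1 j) //= lerDl; apply: sumr_ge0 => k _; rewrite ltW ?expR_gt0 //.
Qed.

Lemma probY_ge0 (th : 'I_m -> R) y : in01 th -> 0 <= probY th y.
Proof.
move=> hth; apply: prodr_ge0 => t _; case/andP: (hth t) => h0 h1.
by case: (y t); lra.
Qed.

Lemma acc_sum (P : mat R n m) th j : (0 < m)%N ->
  \sum_(t < m) (P j t - th t) ^+ 2 = m%:R * (1 - accuracy P th j).
Proof.
move=> hm; rewrite /accuracy; field.
by rewrite pnatr_eq0 -lt0n.
Qed.

End Acc.
Section Bad.
Variables (R : realType) (n m : nat).

Lemma bad_bound (eta eps : R) (P r : mat R n m) (th : 'I_m -> R) (i ist : 'I_n) :
  0 < eta -> eta <= eps / 40 -> 0 < eps <= 1 -> (0 < m)%N ->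
  (forall j, in01 (P j)) -> (forall j, in01 (r j)) -> in01 th ->
  (forall j t, `|r j t - P j t| <= 4 * eta) ->
  accuracy P th i < accuracy P th ist - eps ->
  \sum_(y : outcome m) probY th y * MW eta r y i <= expR (- (11 / 20 * (eta * eps * m%:R))).
Proof.
move=> he he1 /andP[hE0 hE1] hm hP hr hth hrP hacc.
pose f t b := expR (eta * (Sq (r i t) b - Sq (r ist t) b)).
have step1 : \sum_(y : outcome m) probY th y * MW eta r y i
    <= \sum_(y : outcome m) probY th y * \prod_t f t (y t).
  apply: ler_sum => y _; apply: ler_wpM2l; first exact: probY_ge0.
  apply: le_trans (MW_le _ _ _ _ ist) _.
  rewrite /f -expR_sum /total_score -sumrB mulr_sumr.
  by [].
apply: le_trans step1 _; rewrite sum_probY_prod.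
pose mu t := th t * (Sq (r i t) true - Sq (r ist t) true) + (1 - th t) * (Sq (r i t) false - Sq (r ist t) false).
have step2 : \prod_t (th t * f t true + (1 - th t) * f t false)
    <= \prod_t expR (eta * mu t + 2 * eta ^+ 2).
  apply: ler_prod => t _; apply/andP; split.
    case/andP: (hth t) => h0 h1.
    by apply: addr_ge0; apply: mulr_ge0; try lra; exact/ltW/expR_gt0.
  apply: HB1 => //; [lra | exact: HB_Sq_bound (hr i t) (hr ist t) | exact: HB_Sq_bound (hr i t) (hr ist t)].
apply: le_trans step2 _; rewrite -expR_sum ler_expR.
have hmu : forall t, mu t <= (P ist t - th t) ^+ 2 - (P i t - th t) ^+ 2 + 16 * eta.
  move=> t; rewrite /mu HB2.
  have h1 := HB3 (hth t) (hr ist t) (hP ist t) (hrP ist t).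
  have h2 := HB3 (hth t) (hr i t) (hP i t) (hrP i t).
  move: h1 h2; rewrite !ler_norml => /andP[h1 h1'] /andP[h2 h2']; lra.
have hsum : \sum_t mu t <= m%:R * (1 - accuracy P th ist) - m%:R * (1 - accuracy P th i) + 16 * eta * m%:R.
  rewrite -!acc_sum // -sumrB.
  apply: le_trans (ler_sum _ (fun t _ => hmu t)) _.
  rewrite big_split /= sumr_const card_ord -mulr_natr; lra.
rewrite big_split /= -mulr_sumr sumr_const card_ord -mulr_natr.
have hm0 : 0 <= (m%:R : R) by rewrite ler0n.
have k0 : \sum_t mu t <= - (eps * m%:R) + 16 * eta * m%:R.
  have : m%:R * (1 - accuracy P th ist) - m%:R * (1 - accuracy P th i) <= - (eps * m%:R).
    have -> : m%:R * (1 - accuracy P th ist) - m%:R * (1 - accuracy P th i)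
       = m%:R * (accuracy P th i - accuracy P th ist) by ring.
    have : accuracy P th i - accuracy P th ist <= - eps by lra.
    move=> h; have := ler_wpM2l hm0 h; lra.
  lra.
have k1 : eta * \sum_t mu t <= eta * (- (eps * m%:R) + 16 * eta * m%:R).
  by apply: ler_wpM2l => //; exact: ltW.
have k2 : eta * eta * m%:R <= eta * (eps / 40) * m%:R.
  by apply: ler_wpM2r => //; apply: ler_wpM2l => //; exact: ltW.
have e1 : forall z : R, z *+ m = z * m%:R by move=> z; rewrite mulr_natr.
rewrite e1.
have e2 : 1 * 2 * eta ^+ 2 * m%:R = 2 * (eta * eta * m%:R) by ring.
rewrite e2; lra.
Qed.

End Bad.
Lemma exists_max (R : realType) n (f : 'I_n -> R) (i0 : 'I_n) : exists i, forall j, f j <= f i.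
Proof.
have [i _ hi] := @arg_maxP _ _ _ i0 xpredT f isT.
by exists i => j; apply: hi.
Qed.

Section Main.
Variables (R : realType) (n m : nat).

Lemma sum_MW (eta : R) (r : mat R n m) y : (0 < n)%N -> \sum_i MW eta r y i = 1.
Proof.
move=> hn; rewrite /MW -mulr_suml divff // gt_eqF //.
rewrite (bigD1 (Ordinal hn)) //= ltr_pwDl ?expR_gt0 //.
by apply: sumr_ge0 => k _; rewrite ltW ?expR_gt0.
Qed.

Lemma acc_main (eta eps delta : R) (P : mat R n m) th :
  (1 < n)%N -> 0 < eps <= 1 -> 0 < delta < 1 -> 0 < eta -> eta <= eps / 40 ->
  (forall i, in01 (P i)) -> in01 th -> 5 * ln (2 * n%:R / delta) / (eta * eps) <= m%:R ->
  accurate eta eps delta P th.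
Proof.
move=> hn /andP[e0 e1] /andP[d0 d1] he he1 hP hth hm r hund.
have he40 : eta <= 1 / 40 by lra.
have htr := @truthful R n m eta hn he he40.
have hr : forall j, in01 (r j) by move=> j; case: (hund j).
have hrP : forall j t, `|r j t - P j t| <= 4 * eta.
  by move=> j t; apply: ((htr j (P j) (hP j)).2 (r j) (hund j)).
have hn0 : (0 < n)%N by apply: ltn_trans hn.
have hn2 : (2 : R) <= n%:R by rewrite (ler_nat R 2 n).
set K := 2 * n%:R / delta.
have hK1 : 1 < K.
  rewrite /K ltr_pdivlMr // mul1r; lra.
have hK0 : 0 < K by lra.
set L := ln K.
have hL : 0 < L by exact: ln_gt0.
have hee : 0 < eta * eps by rewrite mulr_gt0.
have hmL : 5 * L <= eta * eps * m%:R.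
  by move: hm; rewrite ler_pdivrMr // [m%:R * _]mulrC.
have hm0 : (0 < m)%N.
  rewrite lt0n; apply/negP => /eqP hm0; move: hmL; rewrite hm0 mulr0; lra.
have [ist hist] := exists_max (accuracy P th) (Ordinal hn0).
pose bad i := ~~ eps_optimal P th eps i.
pose c := K^-1.
have hc : 0 <= c by rewrite /c invr_ge0 ltW.
have hbad : forall i, bad i -> \sum_(y : outcome m) probY th y * MW eta r y i <= c.
  move=> i /forallPn [j] hj.
  have hacc : accuracy P th i < accuracy P th ist - eps.
    have := hist j; rewrite -ltNge in hj; lra.
  apply: le_trans (bad_bound he he1 _ hm0 hP hr hth hrP hacc) _; first by apply/andP.
  rewrite /c -[K]lnK ?posrE // -/L -expRN ler_expR; lra.
have eS : forall y : outcome m, \sum_(i | eps_optimal P th eps i) MW eta r y i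
    = 1 - \sum_(i | bad i) MW eta r y i.
  by move=> y; rewrite -(sum_MW eta r y hn0) [in RHS](bigID (eps_optimal P th eps)) /= /bad addrK.
rewrite (eq_bigr (fun y => probY th y - probY th y * \sum_(i | bad i) MW eta r y i)); last first.
  by move=> y _; rewrite eS mulrBr mulr1.
rewrite sumrB sum_probY.
have : \sum_(y : outcome m) probY th y * \sum_(i | bad i) MW eta r y i <= delta.
  under eq_bigr do rewrite mulr_sumr.
  rewrite exchange_big /=.
  apply: le_trans (_ : \sum_(i < n) c <= _).
    rewrite [X in _ <= X](bigID bad) /=.
    have : 0 <= \sum_(i | ~~ bad i) c by apply: sumr_ge0.
    have : \sum_(i | bad i) \sum_(y : outcome m) probY th y * MW eta r y i <= \sum_(i | bad i) c.
      by apply: ler_sum => i hi; exact: hbad.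
    lra.
  rewrite sumr_const card_ord -mulr_natr /c /K.
  have -> : (2 * n%:R / delta)^-1 * n%:R = delta / 2.
    by field; rewrite !gt_eqF //; lra.
  lra.
lra.
Qed.

End Main.
Unset Implicit Arguments.

Theorem mainTheorem10 (R : realType) (n m : nat) (eps delta eta : R) :
  (2 <= n)%N -> 0 < eps <= 1 -> 0 < delta < 1 -> 0 < eta <= eps / 40 ->
  approx_truthful n m eta (4 * eta) /\
  (forall (P : mat R n m) (th : 'I_m -> R),
     (forall i, in01 (P i)) -> in01 th ->
     5 * ln (2 * n%:R / delta) / (eta * eps) <= m%:R ->
     accurate eta eps delta P th) /\
  (200 * ln (2 * n%:R / delta) / eps ^+ 2 <= m%:R ->
   forall (P : mat R n m) (th : 'I_m -> R),
     (forall i, in01 (P i)) -> in01 th ->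
     accurate (eps / 40) eps delta P th).
Proof.
move=> hn heps hd /andP[he he1].
have [e0 e1] : 0 < eps /\ eps <= 1 by case/andP: heps.
have he40 : eta <= 1 / 40 by lra.
split; first exact: truthful.
split; first by move=> P th hP hth hm; apply: acc_main.
move=> hm P th hP hth; apply: acc_main => //; [lra |].
have -> : 5 * ln (2 * n%:R / delta) / (eps / 40 * eps) = 200 * ln (2 * n%:R / delta) / eps ^+ 2.
  by field; rewrite gt_eqF.
exact: hm.
Qed.
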